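(* Let $X$ be a real Banach space and let $E\subset X$ be a weakly compact set having no vector of maximum length (no $e\in E$ with $\|e\|=\sup\{\|e'\|:e'\in E\}$). Then the norm-closed convex hull $\overline{\mathrm{co}}(E)$ has no vector of maximum length. In particular, if $X$ fails the Schur property and $(x_n)_{n\ge1}$ is a sequence of unit vectors in $X$ converging weakly to $0$, then $$K=\overline{\mathrm{co}}\left(\left\{\tfrac{n}{n+1}x_n : n\in\mathbb{N}\right\}\cup\{0\}\right)$$ is a closed bounded convex set that is not remotal from $0$.
   Context: $\overline{\mathrm{co}}(E)$ denotes the norm-closed convex hull of $E$. A Banach space has the Schur property if every weakly convergent sequence is norm convergent. For a bounded set $E$ in a Banach space $Z$ and $z\in Z$, let $D(z,E)=\sup\{\|z-e\|: e\in E\}$; $E$ is remotal from $z$ if there exists $e_0\in E$ with $\|z-e_0\|=D(z,E)$. *)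

(* Defs.v *)
From Stdlib Require Import Reals List.
Open Scope R_scope.

Record NormedSpace := {
  ns_car :> Type;
  ns_zero : ns_car;
  ns_add : ns_car -> ns_car -> ns_car;
  ns_opp : ns_car -> ns_car;
  ns_scal : R -> ns_car -> ns_car;
  ns_norm : ns_car -> R;
  ns_add_assoc : forall x y z, ns_add x (ns_add y z) = ns_add (ns_add x y) z;
  ns_add_comm : forall x y, ns_add x y = ns_add y x;
  ns_add_zero : forall x, ns_add ns_zero x = x;
  ns_add_opp : forall x, ns_add x (ns_opp x) = ns_zero;
  ns_scal_assoc : forall a b x, ns_scal a (ns_scal b x) = ns_scal (a * b) x;
  ns_scal_one : forall x, ns_scal 1 x = x;
  ns_scal_distr_l : forall a x y, ns_scal a (ns_add x y) = ns_add (ns_scal a x) (ns_scal a y);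
  ns_scal_distr_r : forall a b x, ns_scal (a + b) x = ns_add (ns_scal a x) (ns_scal b x);
  ns_norm_eq0 : forall x, ns_norm x = 0 -> x = ns_zero;
  ns_norm_scal : forall a x, ns_norm (ns_scal a x) = Rabs a * ns_norm x;
  ns_norm_triangle : forall x y, ns_norm (ns_add x y) <= ns_norm x + ns_norm y
}.

Arguments ns_zero {_}.
Arguments ns_add {_}.
Arguments ns_opp {_}.
Arguments ns_scal {_}.
Arguments ns_norm {_}.

Section Defs.
Variable X : NormedSpace.

Definition ns_sub (x y : X) : X := ns_add x (ns_opp y).

Definition norm_cv (u : nat -> X) (l : X) : Prop :=
  forall eps, eps > 0 -> exists N, forall n, (n >= N)%nat -> ns_norm (ns_sub (u n) l) < eps.

Definition norm_cauchy (u : nat -> X) : Prop :=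
  forall eps, eps > 0 -> exists N, forall n m, (n >= N)%nat -> (m >= N)%nat ->
    ns_norm (ns_sub (u n) (u m)) < eps.

Definition banach : Prop :=
  forall u, norm_cauchy u -> exists l, norm_cv u l.

Definition is_clf (f : X -> R) : Prop :=
  (forall x y, f (ns_add x y) = f x + f y) /\
  (forall a x, f (ns_scal a x) = a * f x) /\
  (exists C, forall x, Rabs (f x) <= C * ns_norm x).

Definition weak_open (U : X -> Prop) : Prop :=
  forall x, U x -> exists (fs : list (X -> R)) (eps : R),
    eps > 0 /\ Forall is_clf fs /\
    forall y, Forall (fun f => Rabs (f y - f x) < eps) fs -> U y.

Definition weakly_compact (E : X -> Prop) : Prop :=
  forall (I : Type) (U : I -> X -> Prop),
    (forall i, weak_open (U i)) ->
    (forall x, E x -> exists i, U i x) ->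
    exists l : list I, forall x, E x -> exists i, In i l /\ U i x.

Definition weak_cv (u : nat -> X) (l : X) : Prop :=
  forall f, is_clf f -> Un_cv (fun n => f (u n)) (f l).

Definition schur : Prop :=
  forall (u : nat -> X) (l : X), weak_cv u l -> exists l', norm_cv u l'.

Definition ns_convex (C : X -> Prop) : Prop :=
  forall x y t, C x -> C y -> 0 <= t <= 1 ->
    C (ns_add (ns_scal t x) (ns_scal (1 - t) y)).

Definition norm_closed (C : X -> Prop) : Prop :=
  forall x, (forall eps, eps > 0 -> exists y, C y /\ ns_norm (ns_sub x y) < eps) -> C x.

Definition ns_bounded (C : X -> Prop) : Prop :=
  exists M, forall x, C x -> ns_norm x <= M.

Definition closed_convex_hull (E : X -> Prop) : X -> Prop :=
  fun x => forall C, ns_convex C -> norm_closed C -> (forall e, E e -> C e) -> C x.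

Definition has_max_length (E : X -> Prop) : Prop :=
  exists e, E e /\ is_lub (fun r => exists e', E e' /\ r = ns_norm e') (ns_norm e).

Definition remotal (z : X) (E : X -> Prop) : Prop :=
  exists e0, E e0 /\ is_lub (fun r => exists e, E e /\ r = ns_norm (ns_sub z e)) (ns_norm (ns_sub z e0)).

End Defs.

Arguments ns_sub {_}.

(* Main.v *)
Require Import Defs.
From Stdlib Require Import Reals Lra Lia ZArith List Classical ClassicalEpsilon FunctionalExtensionality.
Open Scope R_scope.

Lemma Rabs_m1 : Rabs (-1) = 1.
Proof. rewrite Rabs_left; lra. Qed.

Section Alg.
Variable X : NormedSpace.
Implicit Types x y z : X.

Lemma add_zero_r x : ns_add x ns_zero = x.
Proof. rewrite ns_add_comm; apply ns_add_zero. Qed.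

Lemma add_cancel_l x y z : ns_add x y = ns_add x z -> y = z.
Proof.
  intro H. assert (H2: ns_add (ns_opp x) (ns_add x y) = ns_add (ns_opp x) (ns_add x z)) by now rewrite H.
  rewrite !ns_add_assoc in H2. rewrite (ns_add_comm _ (ns_opp x) x), ns_add_opp, !ns_add_zero in H2. exact H2.
Qed.

Lemma scal0 x : ns_scal 0 x = ns_zero.
Proof.
  apply (add_cancel_l (ns_scal 0 x)). rewrite add_zero_r, <- ns_scal_distr_r. now rewrite Rplus_0_r.
Qed.

Lemma opp_scal x : ns_opp x = ns_scal (-1) x.
Proof.
  apply (add_cancel_l x). rewrite ns_add_opp. rewrite <- (ns_scal_one _ x) at 1.
  rewrite <- ns_scal_distr_r. replace (1 + -1) with 0 by ring. now rewrite scal0.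
Qed.

Lemma scal_zero a : ns_scal a (@ns_zero X) = ns_zero.
Proof. rewrite <- (scal0 ns_zero), ns_scal_assoc. now rewrite Rmult_0_r. Qed.

Lemma norm_zero : ns_norm (@ns_zero X) = 0.
Proof. rewrite <- (scal0 ns_zero), ns_norm_scal, Rabs_R0. ring. Qed.

Lemma norm_nonneg x : 0 <= ns_norm x.
Proof.
  pose proof (ns_norm_triangle _ x (ns_scal (-1) x)).
  rewrite <- (ns_scal_one _ x) in H at 1. rewrite <- ns_scal_distr_r in H.
  replace (1 + -1) with 0 in H by ring. rewrite scal0, norm_zero, ns_norm_scal in H.
  rewrite Rabs_m1 in H. lra.
Qed.

Lemma norm_opp x : ns_norm (ns_scal (-1) x) = ns_norm x.
Proof. rewrite ns_norm_scal, Rabs_m1; ring. Qed.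

Lemma add_neg x : ns_add x (ns_scal (-1) x) = ns_zero.
Proof. rewrite <- opp_scal; apply ns_add_opp. Qed.

Lemma sub_decomp x y : x = ns_add y (ns_sub x y).
Proof.
  unfold ns_sub. rewrite ns_add_comm, <- ns_add_assoc, (ns_add_comm _ (ns_opp y) y), ns_add_opp. now rewrite add_zero_r.
Qed.

Lemma norm_sub0 (e : X) : ns_norm (ns_sub ns_zero e) = ns_norm e.
Proof. unfold ns_sub. rewrite ns_add_zero, opp_scal. apply norm_opp. Qed.

End Alg.

Section BW.
Variable T : Type.
Variable le : T -> T -> Prop.
Variable D : T -> Prop.
Variable sup : (T -> Prop) -> T.
Variable f : T -> T.
Hypothesis le_refl : forall x, le x x.
Hypothesis le_trans : forall x y z, le x y -> le y z -> le x z.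
Hypothesis le_antisym : forall x y, le x y -> le y x -> x = y.
Definition chain (C : T -> Prop) := forall x y, C x -> C y -> le x y \/ le y x.
Hypothesis sup_D : forall C, (forall x, C x -> D x) -> chain C -> D (sup C).
Hypothesis sup_ub : forall C, (forall x, C x -> D x) -> chain C -> forall x, C x -> le x (sup C).
Hypothesis sup_least : forall C, (forall x, C x -> D x) -> chain C -> forall y, D y ->
  (forall x, C x -> le x y) -> le (sup C) y.
Hypothesis f_D : forall x, D x -> D (f x).
Hypothesis f_infl : forall x, D x -> le x (f x).

Definition tower (S : T -> Prop) :=
  (forall x, S x -> D x) /\ (forall x, S x -> S (f x)) /\
  (forall C, (forall x, C x -> S x) -> chain C -> S (sup C)).

Definition M x := forall S, tower S -> S x.

Lemma M_tower : tower M.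
Proof.
  split; [|split].
  - intros x Hx. apply (Hx D). split; [auto|split]; auto.

  - intros x Hx S HS. apply HS, Hx, HS.
  - intros C HC Hch S HS. apply HS; auto. intros x Cx; apply HC; auto.
Qed.

Lemma M_D x : M x -> D x.
Proof. apply M_tower. Qed.

Definition extreme c := M c /\ forall x, M x -> le x c -> x <> c -> le (f x) c.

Lemma lemA c : extreme c -> forall x, M x -> le x c \/ le (f c) x.
Proof.
  intros [Mc Ec] x Mx.
  set (S := fun x => M x /\ (le x c \/ le (f c) x)).
  assert (TS : tower S).
  { split; [|split].
    - intros y [My _]; now apply M_D.
    - intros y [My [H|H]]; split; try now apply M_tower.
      + destruct (classic (y = c)) as [->|Hne]; [right; apply le_refl|left; auto].
      + right. eapply le_trans; [exact H|]. apply f_infl, M_D, My.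
    - intros C HC Hch. split.
      + apply M_tower; auto. intros y Cy; apply HC, Cy.
      + destruct (classic (forall y, C y -> le y c)) as [Hall|Hn].
        * left. apply sup_least; auto. intros y Cy; apply M_D, HC, Cy. apply M_D, Mc.
        * right. apply not_all_ex_not in Hn. destruct Hn as [y Hy].
          apply imply_to_and in Hy. destruct Hy as [Cy Hy].
          destruct (HC y Cy) as [_ [H|H]]; [contradiction|].
          eapply le_trans; [exact H|]. apply sup_ub; auto. intros z Cz; apply M_D, HC, Cz. }
  exact (proj2 (Mx S TS)).
Qed.

Lemma all_extreme : forall c, M c -> extreme c.
Proof.
  intros c Mc. apply (Mc extreme). split; [|split].
  - intros y [My _]; now apply M_D.
  - intros y Ey. pose proof (lemA y Ey) as A. destruct Ey as [My Ey]. split.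
    + now apply M_tower.
    + intros x Mx Hle Hne. destruct (A x Mx) as [H|H].
      * destruct (classic (x = y)) as [->|Hne2]. apply le_refl.
        eapply le_trans; [apply (Ey x Mx H Hne2)|]. apply f_infl, M_D, My.
      * exfalso. apply Hne. apply le_antisym; auto.
  - intros C HC Hch. assert (MS : M (sup C)).
    { apply M_tower; auto. intros y Cy; apply HC, Cy. }
    split; auto. intros x Mx Hle Hne.
    assert (CD : forall z, C z -> D z) by (intros z Cz; apply M_D, HC, Cz).
    destruct (classic (forall z, C z -> le z x)) as [Hall|Hn].
    + exfalso. apply Hne. apply le_antisym; auto. apply sup_least; auto. now apply M_D.
    + apply not_all_ex_not in Hn. destruct Hn as [z Hz].
      apply imply_to_and in Hz. destruct Hz as [Cz Hz].
      destruct (lemA z (HC z Cz) x Mx) as [H|H].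
      * destruct (classic (x = z)) as [->|Hne2]. exfalso; apply Hz, le_refl.
        eapply le_trans; [apply (proj2 (HC z Cz) x Mx H Hne2)|]. apply sup_ub; auto.
      * exfalso. apply Hz. eapply le_trans; [|exact H]. apply f_infl, CD, Cz.
Qed.

Theorem bourbaki_witt : exists x, D x /\ f x = x.
Proof.
  assert (Hch : chain M).
  { intros x y Mx My. destruct (lemA y (all_extreme y My) x Mx) as [H|H]; auto.
    right. eapply le_trans; [|exact H]. apply f_infl, M_D, My. }
  assert (MS : M (sup M)) by (apply M_tower; auto).
  exists (sup M). split. now apply M_D.
  apply le_antisym.
  - apply sup_ub; auto. exact M_D. exact (proj1 (proj2 M_tower) _ MS).
  - apply f_infl, M_D, MS.
Qed.
End BW.

Definition is_glbR (A : R -> Prop) (m : R) :=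
  (forall r, A r -> m <= r) /\ (forall m', (forall r, A r -> m' <= r) -> m' <= m).

Definition infR (A : R -> Prop) : R :=
  match excluded_middle_informative (exists m, is_glbR A m) with
  | left H => proj1_sig (constructive_indefinite_description _ H)
  | right _ => 0
  end.

Lemma glb_exists (A : R -> Prop) : (exists r, A r) -> (exists b, forall r, A r -> b <= r) ->
  exists m, is_glbR A m.
Proof.
  intros [r Hr] [b Hb].
  destruct (completeness (fun x => A (- x))) as [m [Hm1 Hm2]].
  - exists (- b). intros x Hx. specialize (Hb _ Hx). lra.
  - exists (- r). now rewrite Ropp_involutive.
  - exists (- m). split.
    + intros s Hs. assert (- s <= m) by (apply Hm1; cbv beta; now rewrite Ropp_involutive). lra.
    + intros m' Hm'. assert (m <= - m'). { apply Hm2. intros x Hx. specialize (Hm' _ Hx). lra. } lra.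
Qed.

Lemma infR_spec (A : R -> Prop) : (exists r, A r) -> (exists b, forall r, A r -> b <= r) ->
  is_glbR A (infR A).
Proof.
  intros H1 H2. pose proof (glb_exists A H1 H2) as H. unfold infR.
  destruct excluded_middle_informative as [H'|H']; [|contradiction].
  exact (proj2_sig (constructive_indefinite_description _ H')).
Qed.

Lemma glb_add (A1 A2 : R -> Prop) m m1 m2 :
  is_glbR A1 m1 -> is_glbR A2 m2 ->
  (forall r1 r2, A1 r1 -> A2 r2 -> m <= r1 + r2) -> m <= m1 + m2.
Proof.
  intros [_ G1] [_ G2] H.
  assert (forall r2, A2 r2 -> m - r2 <= m1).
  { intros r2 Hr2. apply G1. intros r1 Hr1. specialize (H r1 r2 Hr1 Hr2). lra. }
  assert (m - m1 <= m2). { apply G2. intros r2 Hr2. specialize (H0 r2 Hr2). lra. }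
  lra.
Qed.

Lemma glb_scale (A1 A2 : R -> Prop) a m1 m2 : 0 < a ->
  is_glbR A1 m1 -> is_glbR A2 m2 ->
  (forall r, A1 r -> A2 (a * r)) -> (forall r, A2 r -> A1 (r / a)) -> m2 = a * m1.
Proof.
  intros Ha [L1 G1] [L2 G2] H12 H21.
  assert (a * m1 <= m2).
  { apply G2. intros r Hr. specialize (L1 _ (H21 r Hr)).
    apply Rmult_le_compat_l with (r := a) in L1; [|lra].
    replace (a * (r / a)) with r in L1 by (field; lra). exact L1. }
  assert (m2 / a <= m1).
  { apply G1. intros r Hr. specialize (L2 _ (H12 r Hr)).
    apply Rmult_le_compat_l with (r := / a) in L2; [|left; apply Rinv_0_lt_compat; lra].
    unfold Rdiv. rewrite Rmult_comm. replace (/ a * (a * r)) with r in L2 by (field; lra). exact L2. }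
  apply Rmult_le_compat_l with (r := a) in H0; [|lra].
  replace (a * (m2 / a)) with m2 in H0 by (field; lra). lra.
Qed.

Section HB.
Variable X : NormedSpace.
Implicit Types x y z : X.

Definition neg y := ns_scal (-1) y.

Definition sublin (p : X -> R) :=
  (forall y z, p (ns_add y z) <= p y + p z) /\
  (forall a y, 0 < a -> p (ns_scal a y) = a * p y).

Lemma swap4 (a b c d : X) : ns_add (ns_add a b) (ns_add c d) = ns_add (ns_add a c) (ns_add b d).
Proof.
  rewrite !ns_add_assoc. f_equal. rewrite <- !ns_add_assoc. f_equal. apply ns_add_comm.
Qed.

Lemma add_sub_cancel y w : ns_add (ns_add y w) (neg y) = w.
Proof.
  rewrite (ns_add_comm _ y w), <- ns_add_assoc. unfold neg. rewrite add_neg. apply add_zero_r.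
Qed.

Lemma neg_add y z : neg (ns_add y z) = ns_add (neg y) (neg z).
Proof. apply ns_scal_distr_l. Qed.

Lemma sublin_0 p : sublin p -> p ns_zero = 0.
Proof.
  intros [_ H]. pose proof (H 2 ns_zero ltac:(lra)). rewrite scal_zero in H0. lra.
Qed.

Lemma sublin_homog p t y : sublin p -> 0 <= t -> p (ns_scal t y) = t * p y.
Proof.
  intros Hp Ht. destruct Ht as [Ht| <-]. now apply Hp.
  rewrite scal0, sublin_0 by auto. ring.
Qed.

Lemma sublin_neg p y : sublin p -> 0 <= p y + p (neg y).
Proof.
  intros Hp. pose proof (proj1 Hp y (neg y)). unfold neg in H. rewrite add_neg, sublin_0 in H; auto.
Qed.

Definition pzset (p : X -> R) z y := fun r => exists t, 0 <= t /\ r = p (ns_add y (ns_scal t z)) - t * p z.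
Definition pz p z y := infR (pzset p z y).

Lemma pz_glb p z y : sublin p -> is_glbR (pzset p z y) (pz p z y).
Proof.
  intros Hp. apply infR_spec.
  - exists (p (ns_add y (ns_scal 0 z)) - 0 * p z). exists 0. split; auto; lra.
  - exists (- p (neg y)). intros r [t [Ht ->]].
    pose proof (proj1 Hp (ns_add y (ns_scal t z)) (neg y)).
    rewrite add_sub_cancel, sublin_homog in H; auto. lra.
Qed.

Lemma pz_le p z y : sublin p -> pz p z y <= p y.
Proof.
  intros Hp. apply (pz_glb p z y Hp). exists 0. split. lra. rewrite scal0, add_zero_r. ring.
Qed.

Lemma pz_negz p z : sublin p -> pz p z (neg z) <= - p z.
Proof.
  intros Hp. replace (- p z) with (p (ns_add (neg z) (ns_scal 1 z)) - 1 * p z).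
  apply (pz_glb p z (neg z) Hp). exists 1. split; auto; lra.
  rewrite ns_scal_one, ns_add_comm. unfold neg. rewrite add_neg, sublin_0; auto. ring.
Qed.

Lemma scal_add_scal a s y z : ns_scal a (ns_add y (ns_scal s z)) = ns_add (ns_scal a y) (ns_scal (a * s) z).
Proof. now rewrite ns_scal_distr_l, ns_scal_assoc. Qed.

Lemma pz_sublin p z : sublin p -> sublin (pz p z).
Proof.
  intros Hp. split.
  - intros y1 y2. apply (glb_add _ _ _ _ _ (pz_glb p z y1 Hp) (pz_glb p z y2 Hp)).
    intros r1 r2 [t1 [Ht1 ->]] [t2 [Ht2 ->]].
    apply Rle_trans with (p (ns_add (ns_add y1 y2) (ns_scal (t1 + t2) z)) - (t1 + t2) * p z).
    + apply (pz_glb p z _ Hp). exists (t1 + t2). split; auto; lra.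
    + rewrite ns_scal_distr_r, swap4. pose proof (proj1 Hp (ns_add y1 (ns_scal t1 z)) (ns_add y2 (ns_scal t2 z))). lra.
  - intros a y Ha. apply (glb_scale _ _ a _ _ Ha (pz_glb p z y Hp) (pz_glb p z _ Hp)).
    + intros r [t [Ht ->]]. exists (a * t). split. nra.
      rewrite <- scal_add_scal, (proj2 Hp) by auto. ring.
    + intros r [t [Ht ->]]. exists (t / a). split. unfold Rdiv. apply Rmult_le_pos; auto. left; apply Rinv_0_lt_compat; auto.
      replace (ns_add (ns_scal a y) (ns_scal t z)) with (ns_scal a (ns_add y (ns_scal (t / a) z))).
      rewrite (proj2 Hp) by auto. field. lra.
      rewrite scal_add_scal. f_equal. f_equal. field. lra.
Qed.

Lemma norm_sublin : sublin (@ns_norm X).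
Proof.
  split. apply ns_norm_triangle. intros a y Ha. rewrite ns_norm_scal, Rabs_right; auto; lra.
Qed.

Theorem hahn_banach (x0 : X) : exists p : X -> R, is_clf X p /\ (forall y, Rabs (p y) <= ns_norm y) /\ p x0 = ns_norm x0.
Proof.
  set (p0 := pz (@ns_norm X) x0).
  assert (Hp0 : sublin p0) by (apply pz_sublin, norm_sublin).
  set (D := fun p => sublin p /\ forall y, p y <= p0 y).
  set (le := fun p q : X -> R => forall y, q y <= p y).
  set (Aset := fun (Cc : (X -> R) -> Prop) y r => r = p0 y \/ exists p, Cc p /\ r = p y).
  set (sup := fun Cc y => infR (Aset Cc y)).
  set (ff := fun p => match excluded_middle_informative (exists q, D q /\ le p q /\ q <> p) with
                      | left H => proj1_sig (constructive_indefinite_description _ H) | right _ => p end).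
  assert (Sglb : forall Cc, (forall p, Cc p -> D p) -> forall y, is_glbR (Aset Cc y) (sup Cc y)).
  { intros Cc HC y. apply infR_spec. exists (p0 y); now left.
    exists (- p0 (neg y)). intros r [->|[p [Cp ->]]].
    - pose proof (sublin_neg p0 y Hp0); lra.
    - destruct (HC p Cp) as [Hp Hle]. pose proof (sublin_neg p y Hp). pose proof (Hle (neg y)). lra. }
  assert (BW := bourbaki_witt (X -> R) le D sup ff).
  destruct BW as [p [[Hp Hpp0] Hfix]].
  - intros q y; unfold le; lra.
  - intros a b c H1 H2 y; unfold le in *; specialize (H1 y); specialize (H2 y); lra.
  - intros a b H1 H2. apply functional_extensionality. intros y. specialize (H1 y); specialize (H2 y); lra.
  - intros Cc HC Hch. split.
    + split.
      * intros y1 y2. apply (glb_add _ _ _ _ _ (Sglb Cc HC y1) (Sglb Cc HC y2)).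
        assert (Q : forall r1 r2, Aset Cc y1 r1 -> Aset Cc y2 r2 ->
                  exists q, (q = p0 \/ Cc q) /\ sublin q /\ q y1 <= r1 /\ q y2 <= r2).
        { intros r1 r2 [->|[q1 [C1 ->]]] [->|[q2 [C2 ->]]].
          - exists p0. split; [now left|]. split; auto; lra.
          - exists q2. destruct (HC q2 C2) as [Hq Hl]. split; [now right|]. split; auto. split; [apply Hl|lra].
          - exists q1. destruct (HC q1 C1) as [Hq Hl]. split; [now right|]. split; auto. split; [lra|apply Hl].
          - destruct (Hch q1 q2 C1 C2) as [H|H].
            + exists q2. destruct (HC q2 C2) as [Hq Hl]. split; [now right|]. split; auto. split; [apply H|lra].
            + exists q1. destruct (HC q1 C1) as [Hq Hl]. split; [now right|]. split; auto. split; [lra|apply H]. }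
        intros r1 r2 H1 H2. destruct (Q r1 r2 H1 H2) as [q [Hq [Sq [L1 L2]]]].
        apply Rle_trans with (q (ns_add y1 y2)).
        -- apply (Sglb Cc HC). destruct Hq as [->|Hq]; [now left|right; eauto].
        -- pose proof (proj1 Sq y1 y2). lra.
      * intros a y Ha. apply (glb_scale _ _ a _ _ Ha (Sglb Cc HC y) (Sglb Cc HC _)).
        -- intros r [->|[q [Cq ->]]]. left. symmetry; apply (proj2 Hp0); auto. right. exists q. split; auto.
           symmetry; apply (proj2 (proj1 (HC q Cq))); auto.
        -- intros r [->|[q [Cq ->]]].
           ++ left. rewrite (proj2 Hp0) by auto. field. lra.
           ++ right. exists q. split; auto. rewrite (proj2 (proj1 (HC q Cq))) by auto. field. lra.
    + intros y. apply (Sglb Cc HC). now left.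
  - intros Cc HC Hch q Cq y. apply (Sglb Cc HC). right. eauto.
  - intros Cc HC Hch q [Sq Lq] Hub y. apply (Sglb Cc HC). intros r [->|[q' [Cq' ->]]]. apply Lq. apply Hub, Cq'.
  - intros p Dp. unfold ff. destruct excluded_middle_informative as [H|H]; auto.
    destruct (proj2_sig (constructive_indefinite_description _ H)) as [Dq _]. exact Dq.
  - intros p Dp. unfold ff. destruct excluded_middle_informative as [H|H]. 2: intros y; unfold le; lra.
    destruct (proj2_sig (constructive_indefinite_description _ H)) as [_ [Lq _]]. exact Lq.
  -
    assert (Min : forall q, D q -> le p q -> q = p).
    { intros q Dq Lq. apply NNPP. intros Hne. unfold ff in Hfix.
      destruct excluded_middle_informative as [H|H].
      - destruct (proj2_sig (constructive_indefinite_description _ H)) as [_ [_ Hne2]]. contradiction.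
      - apply H. eauto. }
    assert (Hneg : forall z, p (neg z) = - p z).
    { intros z. assert (E : pz p z = p).
      { apply Min. split. now apply pz_sublin. intros y. pose proof (pz_le p z y Hp). pose proof (Hpp0 y). lra.
        intros y. apply pz_le; auto. }
      pose proof (pz_negz p z Hp). rewrite E in H. pose proof (sublin_neg p z Hp). lra. }
    assert (Hbound : forall y, p y <= ns_norm y).
    { intros y. pose proof (Hpp0 y). pose proof (pz_le _ x0 y norm_sublin). unfold p0 in *. lra. }
    exists p. split; [split; [|split]|split].
    + intros a b. apply Rle_antisym. apply Hp.
      rewrite <- (Ropp_involutive (p (ns_add a b))), <- Hneg, neg_add.
      pose proof (proj1 Hp (neg a) (neg b)). rewrite !Hneg in H. lra.
    + intros a y. destruct (Rtotal_order a 0) as [Ha|[->|Ha]].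
      * replace (ns_scal a y) with (ns_scal (- a) (neg y)).
        rewrite (proj2 Hp), Hneg by lra. ring.
        unfold neg. rewrite ns_scal_assoc. f_equal. ring.
      * rewrite scal0, sublin_0; auto. ring.
      * now apply Hp.
    + exists 1. intros y. apply Rabs_le. split.
      * pose proof (Hbound (neg y)). rewrite Hneg in H. unfold neg in H. rewrite norm_opp in H. lra.
      * rewrite Rmult_1_l; auto.
    + intros y. apply Rabs_le. split; auto.
      pose proof (Hbound (neg y)). rewrite Hneg in H. unfold neg in H. rewrite norm_opp in H. lra.
    + apply Rle_antisym; auto.
      pose proof (Hpp0 (neg x0)). pose proof (pz_negz _ x0 norm_sublin). fold p0 in H0.
      rewrite Hneg in H. lra.
Qed.
End HB.

Lemma archi_inv d : 0 < d -> exists n : nat, / (INR n + 1) < d.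
Proof.
  intros Hd. destruct (archimed (/ d)) as [H1 _].
  assert (Hpos : 0 < / d) by (apply Rinv_0_lt_compat; auto).
  exists (Z.to_nat (up (/ d))). rewrite INR_IZR_INZ, Z2Nat.id.
  - rewrite <- (Rinv_inv d) at 2. apply Rinv_lt_contravar. apply Rmult_lt_0_compat; lra. lra.
  - apply le_IZR. lra.
Qed.

Definition lmax (l : list nat) := fold_right Nat.max 0%nat l.
Lemma lmax_in i l : In i l -> (i <= lmax l)%nat.
Proof. induction l; simpl; [tauto|]. intros [->|H]; [lia|]. specialize (IHl H). lia. Qed.

Lemma Rabs_le_b a b : Rabs a <= b -> - b <= a <= b.
Proof. intros H. pose proof (Rle_abs a). pose proof (Rabs_Ropp a). pose proof (Rle_abs (-a)). lra. Qed.

Section P1.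
Variable X : NormedSpace.
Implicit Types x y z : X.

Lemma clf_sub (f : X -> R) x y : is_clf X f -> f (ns_sub x y) = f x - f y.
Proof.
  intros [Ha [Hs _]]. unfold ns_sub. rewrite Ha, opp_scal, Hs. ring.
Qed.

Lemma halfspace_closed (f : X -> R) c : is_clf X f -> (forall y, Rabs (f y) <= ns_norm y) ->
  norm_closed X (fun y => f y <= c).
Proof.
  intros Hf Hb x Hx. apply Rnot_lt_le. intros Hlt.
  destruct (Hx (f x - c)) as [y [Hy Hn]]. lra.
  pose proof (Hb (ns_sub x y)). rewrite clf_sub in H by auto.
  apply Rabs_le_b in H. lra.
Qed.

Lemma halfspace_convex (f : X -> R) c : is_clf X f -> ns_convex X (fun y => f y <= c).
Proof.
  intros Hf x y t Hx Hy Ht. destruct Hf as [Ha [Hs _]]. rewrite Ha, !Hs. nra.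
Qed.

Lemma hull_incl (E : X -> Prop) e : E e -> closed_convex_hull X E e.
Proof. intros He C _ _ HC. now apply HC. Qed.

Theorem part1 (E : X -> Prop) : weakly_compact X E -> ~ has_max_length X E ->
  ~ has_max_length X (closed_convex_hull X E).
Proof.
  intros Hwc Hno [x [Hx [Hub Hlub]]].
  destruct (hahn_banach X x) as [f [Hf [Hb Hfx]]].
  assert (Ex : exists e, E e /\ ns_norm x <= f e).
  { apply NNPP. intros Hn.
    assert (Hlt : forall e, E e -> f e < ns_norm x).
    { intros e He. apply Rnot_le_lt. intros Hle. apply Hn. eauto. }
    set (U := fun (n : nat) y => f y < ns_norm x - / (INR n + 1)).
    destruct (Hwc nat U) as [l Hl].
    - intros n y Hy. exists (f :: nil), (ns_norm x - / (INR n + 1) - f y). split; [|split].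
      + unfold U in Hy. lra.
      + constructor; auto.
      + intros y' Hy'. inversion Hy'; subst. apply Rabs_def2 in H1. unfold U. lra.
    - intros e He. destruct (archi_inv (ns_norm x - f e)) as [n Hn']. specialize (Hlt e He); lra.
      exists n. unfold U. lra.
    - set (N := lmax l).
      assert (HC : forall e, E e -> f e <= ns_norm x - / (INR N + 1)).
      { intros e He. destruct (Hl e He) as [i [Hi Hu]]. unfold U in Hu.
        assert (Hi' := lmax_in i l Hi). fold N in Hi'. apply le_INR in Hi'.
        assert (/ (INR N + 1) <= / (INR i + 1)).
        { apply Rinv_le_contravar. pose proof (pos_INR i); lra. lra. }
        lra. }
      assert (Hxc := Hx _ (halfspace_convex f _ Hf) (halfspace_closed f _ Hf Hb) HC).
      simpl in Hxc. assert (0 < / (INR N + 1)) by (apply Rinv_0_lt_compat; pose proof (pos_INR N); lra).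
      lra. }
  destruct Ex as [e [He Hfe]].
  assert (Hex : ns_norm e <= ns_norm x) by (apply Hub; exists e; split; auto; apply hull_incl; auto).
  assert (Hfe2 : f e <= ns_norm e) by (pose proof (Hb e); apply Rabs_le_b in H; lra).
  apply Hno. exists e. split; auto. split.
  - intros r [e' [He' ->]]. assert (ns_norm e' <= ns_norm x) by (apply Hub; exists e'; split; auto; apply hull_incl; auto). lra.
  - intros b Hb'. apply Hb'. eauto.
Qed.
End P1.

Section P2.
Variable X : NormedSpace.
Implicit Types x y z : X.

Lemma hull_closed (E : X -> Prop) : norm_closed X (closed_convex_hull X E).
Proof.
  intros x Hx C Hc Hcl HE. apply Hcl. intros eps Heps. destruct (Hx eps Heps) as [y [Hy Hn]].
  exists y. split; [apply Hy; auto | exact Hn].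
Qed.

Lemma hull_convex (E : X -> Prop) : ns_convex X (closed_convex_hull X E).
Proof. intros x y t Hx Hy Ht C Hc Hcl HE. apply Hc; [apply Hx|apply Hy|]; auto. Qed.

Lemma ball_closed : norm_closed X (fun y => ns_norm y <= 1).
Proof.
  intros x Hx. apply Rnot_lt_le. intros Hlt. destruct (Hx (ns_norm x - 1)) as [y [Hy Hn]]. lra.
  pose proof (ns_norm_triangle _ y (ns_sub x y)). rewrite <- sub_decomp in H. lra.
Qed.

Lemma ball_convex : ns_convex X (fun y => ns_norm y <= 1).
Proof.
  intros x y t Hx Hy Ht. eapply Rle_trans. apply ns_norm_triangle.
  rewrite !ns_norm_scal, !Rabs_right by lra. nra.
Qed.

Lemma clf_zero (f : X -> R) : is_clf X f -> f ns_zero = 0.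
Proof. intros [_ [Hs _]]. rewrite <- (scal0 X ns_zero), Hs. ring. Qed.

Lemma coef_bounds n : 0 <= INR n / (INR n + 1) < 1.
Proof.
  pose proof (pos_INR n). split.
  - unfold Rdiv. apply Rmult_le_pos; auto. left; apply Rinv_0_lt_compat; lra.
  - apply (Rmult_lt_reg_r (INR n + 1)). lra. unfold Rdiv. rewrite Rmult_assoc, Rinv_l by lra. lra.
Qed.

Variable x : nat -> X.
Definition pt n := ns_scal (INR n / (INR n + 1)) (x n).
Definition Sset := fun y => (exists n, (n >= 1)%nat /\ y = ns_scal (INR n / (INR n + 1)) (x n)) \/ y = ns_zero.

Lemma fin_conv (fs : list (X -> R)) eps : weak_cv X x ns_zero -> eps > 0 -> Forall (is_clf X) fs ->
  exists N, forall n, (n >= N)%nat -> Forall (fun f => Rabs (f (pt n) - f ns_zero) < eps) fs.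
Proof.
  intros Hw Heps Hfs. induction Hfs as [|f fs Hf Hfs IH].
  - exists 0%nat. intros; constructor.
  - destruct IH as [N1 HN1]. destruct (Hw f Hf eps Heps) as [N2 HN2].
    exists (Nat.max N1 N2). intros n Hn. constructor; [|apply HN1; lia].
    specialize (HN2 n ltac:(lia)). unfold R_dist in HN2. rewrite clf_zero in * by auto.
    unfold pt. destruct Hf as [Ha [Hs Hc]]. rewrite Hs. rewrite Rminus_0_r in *.
    rewrite Rabs_mult. pose proof (coef_bounds n). rewrite (Rabs_right (INR n / _)) by lra.
    pose proof (Rabs_pos (f (x n))). nra.
Qed.

Lemma S_wc : weak_cv X x ns_zero -> weakly_compact X Sset.
Proof.
  intros Hw I U Hop Hcov.
  destruct (Hcov ns_zero (or_intror eq_refl)) as [i0 Hi0].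
  destruct (Hop i0 ns_zero Hi0) as [fs [eps [Heps [Hfs HU]]]].
  destruct (fin_conv fs eps Hw Heps Hfs) as [N HN].
  assert (Hl : forall N, exists l : list I, forall n, (n < N)%nat -> (n >= 1)%nat -> exists i, In i l /\ U i (pt n)).
  { induction N0 as [|M IH].
    - exists nil. intros; lia.
    - destruct IH as [l Hl]. destruct (classic (M >= 1)%nat) as [HM|HM].
      + destruct (Hcov (pt M)) as [j Hj]. left. exists M. split; auto.
        exists (j :: l). intros n Hn Hn1. destruct (Nat.eq_dec n M) as [->|Hne].
        * exists j; split; auto. now left.
        * destruct (Hl n ltac:(lia) Hn1) as [i [Hi Hu]]. exists i; split; auto. now right.
      + exists l. intros n Hn Hn1. apply Hl; lia. }
  destruct (Hl N) as [l Hl']. exists (i0 :: l).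
  intros y [[n [Hn ->]]| ->].
  - destruct (le_lt_dec N n) as [HNn|HnN].
    + exists i0. split. now left. apply HU, HN, HNn.
    + destruct (Hl' n HnN Hn) as [i [Hi Hu]]. exists i. split. now right. exact Hu.
  - exists i0. split; auto. now left.
Qed.

Lemma S_nomax : (forall n, (n >= 1)%nat -> ns_norm (x n) = 1) -> ~ has_max_length X Sset.
Proof.
  intros Hu [e [He [Hub _]]].
  assert (Hnp : forall n, (n >= 1)%nat -> ns_norm (pt n) = INR n / (INR n + 1)).
  { intros n Hn. unfold pt. rewrite ns_norm_scal, Hu by auto. pose proof (coef_bounds n).
    rewrite Rabs_right by lra. ring. }
  assert (Hin : forall n, (n >= 1)%nat -> INR n / (INR n + 1) <= ns_norm e).
  { intros n Hn. apply Hub. exists (pt n). split. left. exists n. split; auto. now rewrite Hnp. }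
  destruct He as [[n [Hn ->]]| ->].
  - specialize (Hin (S n) ltac:(lia)). fold (pt n) in Hin. rewrite Hnp in Hin by auto.
    rewrite S_INR in Hin. pose proof (pos_INR n).
    assert (INR n / (INR n + 1) < (INR n + 1) / (INR n + 1 + 1)).
    { apply (Rmult_lt_reg_r ((INR n + 1) * (INR n + 1 + 1))). nra.
      unfold Rdiv. replace (INR n * / (INR n + 1) * ((INR n + 1) * (INR n + 1 + 1))) with (INR n * (INR n + 1 + 1)) by (field; lra).
      replace ((INR n + 1) * / (INR n + 1 + 1) * ((INR n + 1) * (INR n + 1 + 1))) with ((INR n + 1) * (INR n + 1)) by (field; lra).
      nra. }
    lra.
  - specialize (Hin 1%nat ltac:(lia)). rewrite norm_zero in Hin. simpl in Hin. lra.
Qed.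
End P2.

Theorem mainTheorem3 (X : NormedSpace) (HX : banach X) :
  (forall E : X -> Prop,
      weakly_compact X E -> ~ has_max_length X E ->
      ~ has_max_length X (closed_convex_hull X E)) /\
  (forall x : nat -> X,
      ~ schur X ->
      (forall n, (n >= 1)%nat -> ns_norm (x n) = 1) ->
      weak_cv X x ns_zero ->
      let K := closed_convex_hull X
                 (fun y => (exists n, (n >= 1)%nat /\ y = ns_scal (INR n / (INR n + 1)) (x n))
                           \/ y = ns_zero) in
      norm_closed X K /\ ns_bounded X K /\ ns_convex X K /\ ~ remotal X ns_zero K).
Proof.
  split. { intros E; apply part1. }
  intros x _ Hu Hw K. split; [|split; [|split]].
  - apply hull_closed.
  - exists 1. intros y Hy. apply Hy. apply ball_convex. apply ball_closed.
    intros e [[n [Hn ->]]| ->].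
    + rewrite ns_norm_scal, Hu by auto. pose proof (coef_bounds n). rewrite Rabs_right; lra.
    + rewrite norm_zero; lra.
  - apply hull_convex.
  - intros [e0 [He0 [Hub Hlub]]]. apply (part1 X (Sset X x) (S_wc X x Hw) (S_nomax X x Hu)).
    exists e0. split. exact He0. rewrite norm_sub0 in Hub, Hlub. split.
    + intros r [e [He ->]]. apply Hub. exists e. split; auto. now rewrite norm_sub0.
    + intros b Hb. apply Hlub. intros r [e [He ->]]. rewrite norm_sub0. apply Hb. eauto.
Qed.
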